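(* Let $X$ be a space with a binary normal closed subbase $\mathcal S$, let $Z$ be an arbitrary space, and let $\Phi\colon Z\to X$ be an $\mathcal S$-continuous set-valued map such that each $\Phi(z)\subset X$ is (nonempty and) closed. Then the set-valued map $\Psi\colon Z\to X$, $\Psi(z)=I_{\mathcal S}(\Phi(z))$, has a continuous single-valued selection, i.e. a continuous $h\colon Z\to X$ with $h(z)\in\Psi(z)$ for all $z\in Z$.
   Context: All spaces are Tychonoff; set-valued maps have nonempty values. A family $\mathcal S$ of closed subsets of $X$ is a closed subbase if every closed subset of $X$ is an intersection of finite unions of members of $\mathcal S$. A family of sets is linked if any two members intersect; $\mathcal S$ is binary if every linked subfamily of $\mathcal S$ has nonempty intersection. $\mathcal S$ is normal if for every disjoint $S_0,S_1\in\mathcal S$ there exist $T_0,T_1\in\mathcal S$ with $S_0\cap T_1=\varnothing=T_0\cap S_1$ and $T_0\cup T_1=X$. For $B\subset X$, $I_{\mathcal S}(B)=\bigcap\{S\in\mathcal S:B\subset S\}$. A set-valued map $\Phi\colon Z\to X$ is $\mathcal S$-continuous if for every $S\in\mathcal S$ both $\{z:\Phi(z)\cap(X\setminus S)\neq\varnothing\}$ and $\{z:\Phi(z)\subset X\setminus S\}$ are open in $Z$. *)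

(* Defs.v *)
From HB Require Import structures.
From mathcomp Require Import all_boot all_order.
From mathcomp Require Import all_classical all_reals all_analysis.
Set Implicit Arguments. Unset Strict Implicit. Unset Printing Implicit Defensive.
Local Open Scope classical_set_scope.

Definition tychonoff_space (T : topologicalType) : Prop :=
  completely_regular_space T /\ hausdorff_space T.

Definition finite_unions (X : Type) (S : set (set X)) : set (set X) :=
  [set B | exists s : seq (set X),
     (forall A, A \in s -> S A) /\ B = \big[setU/set0]_(A <- s) A].

Definition closed_subbase (X : topologicalType) (S : set (set X)) : Prop :=
  (forall A, S A -> closed A) /\
  (forall F : set X, closed F ->
     exists G : set (set X), G `<=` finite_unions S /\ F = \bigcap_(B in G) B).

Definition linked (X : Type) (L : set (set X)) : Prop :=
  forall A B, L A -> L B -> A `&` B !=set0.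

Definition binary (X : Type) (S : set (set X)) : Prop :=
  forall L, L `<=` S -> linked L -> \bigcap_(A in L) A !=set0.

Definition normal_family (X : Type) (S : set (set X)) : Prop :=
  forall S0 S1, S S0 -> S S1 -> S0 `&` S1 = set0 ->
    exists T0 T1, [/\ S T0, S T1, S0 `&` T1 = set0, T0 `&` S1 = set0
                    & T0 `|` T1 = setT].

Definition I_S (X : Type) (S : set (set X)) (B : set X) : set X :=
  \bigcap_(A in [set A | S A /\ B `<=` A]) A.

Definition S_continuous (Z X : topologicalType) (S : set (set X))
    (Phi : Z -> set X) : Prop :=
  forall A, S A ->
    open [set z | Phi z `&` ~` A !=set0] /\ open [set z | Phi z `<=` ~` A].

(* Main.v *)
Require Import Defs.
From HB Require Import structures.
From mathcomp Require Import all_boot all_order.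
From mathcomp Require Import all_classical all_reals all_analysis.
Local Open Scope classical_set_scope.

Lemma bigU_seqP (X : Type) (s : seq (set X)) (x : X) :
  (\big[setU/set0]_(A <- s) A) x -> exists A, A \in s /\ A x.
Proof.
elim: s => [|A s IH]; first by rewrite big_nil.
rewrite big_cons => -[Ax|/IH [B [Bs Bx]]].
  by exists A; rewrite in_cons eqxx.
by exists B; rewrite in_cons Bs orbT.
Qed.
Arguments bigU_seqP {X s x}.

Lemma open_loc (T : topologicalType) (W : set T) :
  (forall z, W z -> exists V, open V /\ V z /\ V `<=` W) -> open W.
Proof.
move=> H; rewrite openE => z Wz.
have [V [oV [Vz VW]]] := H z Wz.
rewrite /interior; apply: (filterS VW); apply: open_nbhs_nbhs; by split.
Qed.

Theorem corollary1p2 (X Z : topologicalType) (S : set (set X))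
  (Phi : Z -> set X) :
  tychonoff_space X -> tychonoff_space Z ->
  closed_subbase S -> binary S -> normal_family S ->
  S_continuous S Phi ->
  (forall z, Phi z !=set0) -> (forall z, closed (Phi z)) ->
  exists h : Z -> X, continuous h /\ (forall z, I_S S (Phi z) (h z)).
Proof.
move=> [_ hX] _ [Scl Ssub] Sbin Snorm Scont Phi0 _.
have [a _] : [set: X] !=set0.
  have := Sbin set0 (sub0set _) (fun A B (f : set0 A) => False_ind _ f).
  by rewrite bigcap_set0.
have PT : forall p q : X, (forall T, S T -> T p -> T q) -> q = p.
  move=> p q Hpq; apply: contrapT => qp.
  have [G [GF Gp]] := Ssub [set p] (compact_closed hX (@compact_set1 X p)).
  have : ~ (\bigcap_(B in G) B) q by rewrite -Gp.
  move=> /existsNP [B /not_implyP [GB nBq]].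
  have [s [sS Bs]] := GF B GB.
  have : (\bigcap_(B in G) B) p by rewrite -Gp.
  move=> /(_ B GB) Bp.
  rewrite Bs in Bp nBq.
  have [A [As Ap]] := bigU_seqP Bp.
  apply: nBq.
  have : A q by apply: Hpq => //; apply: sS.
  clear -As; elim: s As => [|A' s IH]; first by rewrite in_nil.
  rewrite in_cons big_cons => /orP [/eqP <-|/IH H] Aq; [by left|by right; apply: H].
have SEP : forall (p : X) A, S A -> A !=set0 -> ~ A p ->
    exists B, [/\ S B, B p & B `&` A = set0].
  move=> p A SA A0 nAp; apply: contrapT => nex.
  pose L := [set T | S T /\ T p] `|` [set A].
  have LS : L `<=` S by move=> T [[]|->].
  have Llk : linked L.
    have key : forall T, S T -> T p -> T `&` A !=set0.
      move=> T ST Tp; apply: contrapT => nTA; apply: nex; exists T; split => //.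
      by apply/seteqP; split => // x [Tx Ax]; apply: nTA; exists x.
    move=> T T' [[ST Tp]|->] [[ST' Tp']|->].
    - by exists p.
    - exact: key.
    - by rewrite setIC; apply: key.
    - by rewrite setIid.
  have [q Lq] := Sbin L LS Llk.
  have qp : q = p by apply: PT => T ST Tp; apply: Lq; left.
  by apply: nAp; rewrite -qp; apply: Lq; right.
pose Psi z := I_S S (Phi z).
pose Fam z := [set T | S T /\ ((T a /\ T `&` Psi z !=set0) \/ Phi z `<=` T)].
have PsiT : forall z T, S T -> Phi z `<=` T -> Psi z `<=` T.
  by move=> z T ST PT' x Px; apply: Px.
have PhiPsi : forall z, Phi z `<=` Psi z by move=> z x Px T [_]; apply.
have hex : forall z, exists x, (\bigcap_(T in Fam z) T) x.
  move=> z; apply: Sbin; first by move=> T [].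
  move=> T T' [ST [[Ta [q [Tq Pq]]]|PT1]] [ST' [[Ta' [q' [Tq' Pq']]]|PT2]].
  - by exists a.
  - by exists q; split => //; apply: PsiT Pq.
  - by exists q'; split => //; apply: PsiT Pq'.
  - by have [x Px] := Phi0 z; exists x; split; [apply: PT1|apply: PT2].
have [h hP] := choice hex.
have P1 : forall z T, S T -> Phi z `<=` T -> T (h z).
  by move=> z T ST PT'; apply: hP; split => //; right.
have P2 : forall z T, S T -> T a -> T `&` Psi z !=set0 -> T (h z).
  by move=> z T ST Ta TP; apply: hP; split => //; left.
have hPsi : forall z, Psi z (h z) by move=> z T [ST PT']; apply: P1.
exists h; split => //.
have LOC : forall z A, S A -> ~ A (h z) ->
    exists V, [/\ open V, V z & forall z', V z' -> ~ A (h z')].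
  move=> z A SA nA.
  have [A0|A0] := pselect (A !=set0); last first.
    exists setT; split; [exact: openT|by []|] => z' _ Az'; apply: A0; by exists (h z').
  have [S' [SS' S'h S'A]] := SEP (h z) A SA A0 nA.
  have [T0 [T1 [ST0 ST1 S'T1 T0A T01]]] := Snorm S' A SS' SA S'A.
  have nT1h : ~ T1 (h z).
    by move=> T1h; have : (S' `&` T1) (h z) by []; rewrite S'T1.
  have T0ok : forall x, T0 x -> ~ A x.
    by move=> x T0x Ax; have : (T0 `&` A) x by []; rewrite T0A.
  have T01x : forall x, ~ T1 x -> T0 x.
    move=> x nT1x; have : (T0 `|` T1) x by rewrite T01.
    by case.
  have [aT0|aT0] : T0 a \/ T1 a.
    by have : (T0 `|` T1) a by rewrite T01.
  - exists [set z' | Phi z' `&` ~` T1 !=set0]; split.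
    + exact: (Scont T1 ST1).1.
    + apply: contrapT => /forallNP H; apply: nT1h; apply: P1 => // x Px.
      by apply: contrapT => nT1x; apply: (H x).
    + move=> z' [x [Px nT1x]]; apply: T0ok; apply: P2 => //.
      by exists x; split; [apply: T01x|apply: PhiPsi].
  - have PsiT1 : ~ (T1 `&` Psi z !=set0) by move=> H; apply: nT1h; apply: P2.
    have [B [SB PB BT1]] : exists B, [/\ S B, Phi z `<=` B & B `&` T1 = set0].
      apply: contrapT => nex.
      pose L := [set B | S B /\ Phi z `<=` B] `|` [set T1].
      have LS : L `<=` S by move=> T [[]|->].
      have key : forall B, S B -> Phi z `<=` B -> B `&` T1 !=set0.
        move=> B SB PB; apply: contrapT => nTA; apply: nex; exists B; split => //.
        by apply/seteqP; split => // x [Tx Ax]; apply: nTA; exists x.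
      have Llk : linked L.
        move=> T T' [[ST PTz]|->] [[ST' PTz']|->].
        - by have [x Px] := Phi0 z; exists x; split; [apply: PTz|apply: PTz'].
        - exact: key.
        - by rewrite setIC; apply: key.
        - by rewrite setIid; exists a.
      have [q Lq] := Sbin L LS Llk.
      apply: PsiT1; exists q; split; first by apply: Lq; right.
      by move=> T [ST PTz]; apply: Lq; left.
    have [U0 [U1 [SU0 SU1 BU1 U0T1 U01]]] := Snorm B T1 SB ST1 BT1.
    exists [set z' | Phi z' `<=` ~` U1]; split.
    + exact: (Scont U1 SU1).2.
    + move=> x Px U1x; have : (B `&` U1) x by split => //; apply: PB.
      by rewrite BU1.
    + move=> z' PU; apply: T0ok; apply: T01x => T1h.
      have hU0 : U0 (h z').
        apply: P1 => // x Px; have : (U0 `|` U1) x by rewrite U01.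
        by case => // U1x; exfalso; apply: (PU x Px).
      by have : (U0 `&` T1) (h z') by []; rewrite U0T1.
have LOCU : forall z (s : seq (set X)), (forall A, A \in s -> S A) ->
    ~ (\big[setU/set0]_(A <- s) A) (h z) ->
    exists V, [/\ open V, V z & forall z', V z' -> ~ (\big[setU/set0]_(A <- s) A) (h z')].
  move=> z; elim => [|A s IH] sS.
    by move=> _; exists setT; split; [exact: openT|by []|] => z' _; rewrite big_nil.
  rewrite big_cons => nU.
  have [V1 [oV1 V1z HV1]] := LOC z A (sS A (mem_head _ _)) (fun H => nU (or_introl H)).
  have [V2 [oV2 V2z HV2]] := IH (fun B Bs => sS B (ltac:(by rewrite in_cons Bs orbT))) (fun H => nU (or_intror H)).
  exists (V1 `&` V2); split => //; first exact: openI.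
  by move=> z' [V1z' V2z'] [H|H]; [apply: (HV1 z')|apply: (HV2 z')].
apply/continuousP => O oO; apply: open_loc => z Oz.
have [G [GF GO]] := Ssub (~` O) (open_closedC oO).
have : ~ (\bigcap_(B in G) B) (h z) by rewrite -GO.
move=> /existsNP [B /not_implyP [GB nBh]].
have [s [sS Bs]] := GF B GB.
rewrite Bs in nBh.
have [V [oV Vz HV]] := LOCU z s sS nBh.
exists V; split; first exact: oV.
split; first exact: Vz.
move=> z' Vz'; apply: contrapT => nO.
have : (~` O) (h z') by exact: nO.
rewrite GO => /(_ B GB).
rewrite Bs; exact: (HV z' Vz').
Qed.
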